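(* Let $n\ge 2$, let $M$ be an $n$-Metric on a set $X$, and let $\mathcal{T}$ be the topology on $X$ generated by the $M$-open balls $B^M_\epsilon(x)=\{y\in X\mid M(\langle x\rangle^{n-1},y)<\epsilon\}$ ($x\in X$, $\epsilon>0$). Then $(X,\mathcal{T})$ is a metric space, i.e. there is a metric on $X$ whose open balls generate $\mathcal{T}$.
   Context: Notation: $\langle a\rangle^k$ denotes the $k$-tuple $(a,\dots,a)$ inserted into an argument list. An $n$-Metric on $X$ is a function $M:X^n\to\mathbb{R}$ such that for all $x_1,\dots,x_n,a\in X$: (1) $0\le M(\langle x_1\rangle^{n-1},x_2)$; (2) $M(x_1,\dots,x_n)=M(x_{\pi(1)},\dots,x_{\pi(n)})$ for every permutation $\pi$ of $\{1,\dots,n\}$; (3) $M(\langle x_1\rangle^{n-1},x_2)=0$ if and only if $x_1=x_2$; (4) $M(x_1,\dots,x_n)\le M(x_1,\dots,x_{n-1},a)+M(\langle a\rangle^{n-1},x_n)$. The $M$-open balls form a basis of a topology on $X$. *)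

(* Defs.v *)
From Stdlib Require Import Reals.
From mathcomp Require Import all_boot all_fingroup.
Set Implicit Arguments. Unset Strict Implicit. Unset Printing Implicit Defensive.

Local Open Scope R_scope.

Definition set_last {X : Type} {n : nat} (f : 'I_n -> X) (a : X) : 'I_n -> X :=
  fun i => if val i == n.-1 then a else f i.

Definition rep_last {X : Type} (n : nat) (x1 x2 : X) : 'I_n -> X :=
  set_last (fun _ => x1) x2.

Definition is_nMetric {X : Type} (n : nat) (M : ('I_n -> X) -> R) : Prop :=
  (forall x1 x2 : X, 0 <= M (@rep_last X n x1 x2)) /\
  (forall (f : 'I_n -> X) (p : {perm 'I_n}), M f = M (fun i => f (p i))) /\
  (forall x1 x2 : X, M (@rep_last X n x1 x2) = 0 <-> x1 = x2) /\
  (forall (f : 'I_n -> X) (a : X) (l : 'I_n), val l = n.-1 ->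
     M f <= M (set_last f a) + M (@rep_last X n a (f l))).

Definition Mball {X : Type} (n : nat) (M : ('I_n -> X) -> R) (x : X) (eps : R)
  : X -> Prop := fun y => M (@rep_last X n x y) < eps.

Definition M_open {X : Type} (n : nat) (M : ('I_n -> X) -> R) (U : X -> Prop) : Prop :=
  forall y, U y -> exists x eps, 0 < eps /\ Mball M x eps y /\
                                 (forall z, Mball M x eps z -> U z).

Definition is_metric {X : Type} (d : X -> X -> R) : Prop :=
  (forall x y, 0 <= d x y) /\
  (forall x y, d x y = 0 <-> x = y) /\
  (forall x y, d x y = d y x) /\
  (forall x y z, d x z <= d x y + d y z).

Definition d_open {X : Type} (d : X -> X -> R) (U : X -> Prop) : Prop :=
  forall y, U y -> exists x r, 0 < r /\ d x y < r /\
                               (forall z, d x z < r -> U z).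

(* Main.v *)
Require Import Defs.
From Stdlib Require Import Reals Lra FunctionalExtensionality.
From mathcomp Require Import all_boot all_fingroup.

Local Open Scope R_scope.

Lemma key (X : Type) (n : nat) (M : ('I_n -> X) -> R) (l : 'I_n) :
  is_nMetric M -> val l = n.-1 -> forall x y : X,
  forall k (f : 'I_n -> X), (forall i, f i = x \/ f i = y) ->
    (forall i : 'I_n, (k <= val i)%N -> f i = x) ->
    M f <= INR k * M (@rep_last X n x y).
Proof.
move=> [H1 [H2 [H3 H4]]] Hl x y k.
have D0 := H1 x y.
elim: k => [|k IH] f Hm Hk.
  have -> : f = @rep_last X n x x.
    apply: functional_extensionality => i; rewrite /rep_last /set_last.
    by case: ifP => _; apply: Hk.
  rewrite (proj2 (H3 x x) erefl) /=; lra.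
rewrite S_INR.
case: (ltnP k n) => Hkn; last first.
  have := IH f Hm (fun i Hi => Hk i (leq_trans _ _)).
  move=> H; have : M f <= INR k * M (@rep_last X n x y).
    apply: IH => // i Hi; exfalso; have := ltn_ord i => Hi'.
    by move: (leq_trans Hi' Hkn); rewrite ltnNge Hi.
  nra.
set ik := Ordinal Hkn.
case: (Hm ik) => E.
  have : M f <= INR k * M (@rep_last X n x y).
    apply: IH => // i Hi; case: (eqVneq i ik) => [->//|ne].
    apply: Hk; rewrite ltn_neqAle Hi andbT eq_sym.
    by apply/negP => /eqP e; move/negP: ne; apply; apply/eqP/ord_inj.
  nra.
rewrite (H2 f (tperm ik l)).
set g := fun i => f (tperm ik l i).
have Hg := H4 g x l Hl.
have gl : g l = y by rewrite /g tpermR.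
rewrite gl in Hg.
suff : M (set_last g x) <= INR k * M (@rep_last X n x y) by lra.
apply: IH.
  move=> i; rewrite /set_last; case: ifP => _; [by left|exact: Hm].
move=> i Hi; rewrite /set_last; case: ifP => // /negbT Hin.
rewrite /g; case: (eqVneq i ik) => [ei|nei].
  rewrite ei tpermL; apply: Hk; rewrite Hl.
  have : k != n.-1 by rewrite ei in Hin.
  move=> kn; rewrite ltn_neqAle kn /= -ltnS prednK //.
  exact: (leq_ltn_trans (leq0n k) Hkn).
have nel : l != i by apply/negP => /eqP e; move: Hin; rewrite -e Hl eqxx.
rewrite tpermD //; last by rewrite eq_sym.
apply: Hk; rewrite ltn_neqAle Hi andbT eq_sym.
by apply/negP => /eqP e; move/negP: nei; apply; apply/eqP/ord_inj.
Qed.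

Theorem theorem3p14 (X : Type) (n : nat) (M : ('I_n -> X) -> R) :
  (2 <= n)%N -> is_nMetric M ->
  exists d : X -> X -> R, is_metric d /\
    (forall U : X -> Prop, M_open M U <-> d_open d U).
Proof.
move=> Hn HM.
have Hl : (n.-1 < n)%N by case: n Hn M HM.
set l := Ordinal Hl.
have Hlv : val l = n.-1 by [].
have HM' := HM.
move: HM' => [H1 [H2 [H3 H4]]].
pose D x y := M (@rep_last X n x y).
have tri : forall x y z, D x y <= D x z + D z y.
  move=> x y z; have := H4 (@rep_last X n x y) z l Hlv.
  have -> : set_last (@rep_last X n x y) z = @rep_last X n x z.
    apply: functional_extensionality => i; rewrite /rep_last /set_last.
    by case: ifP => // ->.
  have -> : @rep_last X n x y l = y by rewrite /rep_last /set_last eqxx.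
  by [].
set K := 1 + INR n.-1.
have KP : 0 < K by have := pos_INR n.-1; rewrite /K; lra.
have sym : forall x y, D y x <= INR n.-1 * D x y.
  move=> x y; rewrite /D; apply: (@key X n M l HM Hlv).
    by move=> i; rewrite /rep_last /set_last; case: ifP => _; auto.
  move=> i Hi; rewrite /rep_last /set_last ifT //.
  by rewrite eqn_leq Hi -ltnS prednK ?ltn_ord //; case: n Hn {M HM H1 H2 H3 H4 D tri l Hl Hlv K KP i Hi}.
exists (fun x y => D x y + D y x); split.
  split; first by move=> x y; have := H1 x y; have := H1 y x; rewrite /D; lra.
  split.
    move=> x y; split.
      move=> E; apply/H3; have := H1 x y; have := H1 y x; rewrite /D in E *; lra.
    by move=> <-; rewrite /D (proj2 (H3 x x) erefl); lra.
  split; first by move=> x y; lra.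
  move=> x y z; have := tri x z y; have := tri z x y; lra.
move=> U; split.
  move=> HU y Uy; have [x [eps [ep [By Hsub]]]] := HU y Uy.
  rewrite /Mball in By.
  exists y, (eps - D x y); split; first by rewrite /D; lra.
  split; first by rewrite /D (proj2 (H3 y y) erefl); rewrite /D in By; lra.
  move=> z Hz; apply: Hsub; rewrite /Mball.
  have := tri x z y; have := H1 z y; rewrite /D in Hz *; lra.
move=> HU y Uy; have [x [r [rp [dy Hsub]]]] := HU y Uy.
exists y, ((r - (D x y + D y x)) / K); split.
  apply: Rdiv_lt_0_compat => //; lra.
split.
  rewrite /Mball (proj2 (H3 y y) erefl); apply: Rdiv_lt_0_compat => //; lra.
move=> z; rewrite /Mball => Hz; apply: Hsub.
have Hz' : K * D y z < r - (D x y + D y x).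
  rewrite /D; apply (Rmult_lt_reg_r (/ K)); first by apply: Rinv_0_lt_compat.
  rewrite Rmult_comm -Rmult_assoc Rinv_l ?Rmult_1_l; last lra.
  exact: Hz.
have := sym y z; have := tri x z y; have := tri z x y; have := H1 y z.
rewrite /K in Hz'; rewrite /D in Hz' *; nra.
Qed.
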